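(* Let $(X,d,\kappa)$ be a complete digital metric space where $d$ is an $\ell_p$ metric for some $1\le p\le\infty$, and let $T:X\to X$ be a weakly uniformly strict digital contraction. Then $T$ has a unique fixed point $z$. Moreover, for every $x\in X$, $\lim_{n\to\infty}T^n(x)=z$.
   Context: A digital metric space is a triple $(X,d,\kappa)$ where $X\subset\mathbb{Z}^n$ for some positive integer $n$, $\kappa$ is an adjacency relation on $X$, and $d$ is a metric on $X$. The $\ell_p$ metric on $\mathbb{Z}^n$ is $d(x,y)=(\sum_i|x_i-y_i|^p)^{1/p}$ for $1\le p<\infty$ and $\max_i|x_i-y_i|$ for $p=\infty$. $T:X\to X$ is a weakly uniformly strict digital contraction if for every $\varepsilon>0$ there exists $\delta>0$ such that for all $x,y\in X$, $\varepsilon\le d(x,y)<\varepsilon+\delta$ implies $d(T(x),T(y))<\varepsilon$. $T^n$ denotes the $n$-fold composition of $T$. *)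

(* Defs.v *)
From HB Require Import structures.
From mathcomp Require Import all_boot all_order all_algebra.
From mathcomp Require Import all_classical all_reals all_analysis.
Set Implicit Arguments. Unset Strict Implicit. Unset Printing Implicit Defensive.
Import Order.TTheory GRing.Theory Num.Theory.
Local Open Scope ring_scope.

Definition zpoint (n : nat) := 'I_n -> int.

(* The l_p metric on Z^n, for p in [1, +oo] encoded as an extended real.
   For finite p : (sum_i |x_i - y_i|^p)^(1/p); for p = +oo : max_i |x_i - y_i|. *)
Definition lp_dist (R : realType) (n : nat) (p : \bar R) (x y : zpoint n) : R :=
  match p with
  | EFin r => (\sum_(i < n) (`|(x i - y i)%:~R| : R) `^ r) `^ r^-1
  | _ => \big[Num.max/0]_(i < n) (`|(x i - y i)%:~R| : R)
  end.

Definition dconverges (P : Type) (R : realType) (d : P -> P -> R)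
    (u : nat -> P) (z : P) : Prop :=
  forall eps : R, 0 < eps -> exists N : nat, forall k, (N <= k)%N -> d (u k) z < eps.

Definition dcauchy (P : Type) (R : realType) (d : P -> P -> R) (u : nat -> P) : Prop :=
  forall eps : R, 0 < eps -> exists N : nat, forall k m, (N <= k)%N -> (N <= m)%N ->
    d (u k) (u m) < eps.

Definition dcomplete (P : Type) (R : realType) (X : set P) (d : P -> P -> R) : Prop :=
  forall u : nat -> P, (forall k, X (u k)) -> dcauchy d u ->
    exists2 z, X z & dconverges d u z.

Definition weakly_uniformly_strict_contraction (P : Type) (R : realType)
    (X : set P) (d : P -> P -> R) (T : P -> P) : Prop :=
  forall eps : R, 0 < eps -> exists2 delta : R, 0 < delta &
    forall x y, X x -> X y -> eps <= d x y -> d x y < eps + delta ->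
      d (T x) (T y) < eps.

(* Main.v *)
Require Import Defs.
From HB Require Import structures.
From mathcomp Require Import all_boot all_order all_algebra.
From mathcomp Require Import all_classical all_reals all_analysis.
Import Order.TTheory GRing.Theory Num.Theory.
Local Open Scope ring_scope.

Lemma lp_dist0 (R : realType) (n : nat) (p : \bar R) (x y : zpoint n) : (1 <= p)%E -> lp_dist p x x = 0.
Proof.
case: p => [r| |] //= r1.
  rewrite big1 ?powR0 // ?invr_eq0; last first.
    by move=> i _; rewrite subrr normr0 powR0 // gt_eqF // (lt_le_trans ltr01 r1).
  by rewrite gt_eqF // (lt_le_trans ltr01 r1).
apply: (big_ind (fun v => v = 0)) => //; first by move=> a b -> ->; rewrite maxxx.
by move=> j _; rewrite subrr normr0.
Qed.

Lemma lp_dist1 (R : realType) (n : nat) (p : \bar R) (x y : zpoint n) : (1 <= p)%E -> x <> y ->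
  1 <= lp_dist p x y.
Proof.
move=> p1 xy.
have [i xi] : exists i, x i != y i.
  apply: contrapT => H; apply: xy; apply: funext => i.
  by case: (eqVneq (x i) (y i)) => // Hi; exfalso; apply: H; exists i.
have ti : 1 <= (`|(x i - y i)%:~R| : R).
  rewrite -intr_norm ler1z.
  by rewrite -gtz0_ge1 normr_gt0 subr_eq0.
case: p p1 => [r| |] //= r1.
- have r0 : 0 <= r by rewrite (le_trans ler01).
  have s1 : 1 <= \sum_(i < n) (`|(x i - y i)%:~R| : R) `^ r.
    rewrite (bigD1 i) //=.
    rewrite -[leLHS]addr0; apply: lerD; last by apply: sumr_ge0 => j _; apply: powR_ge0.
    by have := @ler_powR _ _ ti 0 r r0; rewrite powRr0; apply.
  have ri : 0 <= r^-1 by rewrite invr_ge0.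
  by have := @ler_powR _ _ s1 0 _ ri; rewrite powRr0.
- apply: le_trans ti _.
  exact: le_bigmax.
Qed.
Lemma iter_fix (P : Type) (T : P -> P) y m : T y = y -> iter m T y = y.
Proof. by move=> Hy; elim: m => //= m ->. Qed.

Lemma abstract_fp (P : Type) (R : realType) (X : set P) (d : P -> P -> R) (T : P -> P) :
  (forall x, d x x = 0) -> (forall x y, x <> y -> 1 <= d x y) ->
  (exists x0, X x0) -> (forall x, X x -> X (T x)) ->
  weakly_uniformly_strict_contraction X d T ->
  exists z, [/\ X z, T z = z,
    (forall w, X w -> T w = w -> w = z) &
    (forall x, X x -> dconverges d (fun k => iter k T x) z)].
Proof.
move=> d0 d1 [x0 Xx0] XT C.
have Xit : forall x k, X x -> X (iter k T x).
  by move=> x k Xx; elim: k => //= k IH; apply: XT.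
have uniq : forall w z, X w -> X z -> T w = w -> T z = z -> w = z.
  move=> w z Xw Xz Tw Tz; apply: contrapT => wz.
  have h1 := d1 _ _ wz.
  have [de de0 H] := C (d w z) (lt_le_trans ltr01 h1).
  have := H w z Xw Xz (lexx _) ; rewrite ltrDl de0 Tw Tz => /(_ isT).
  by rewrite ltxx.
have ex : forall x, X x -> exists k, T (iter k T x) = iter k T x.
  move=> x Xx; apply: contrapT => Hn.
  have Hk : forall k, T (iter k T x) <> iter k T x.
    by move=> k Hk; apply: Hn; exists k.
  pose a k := d (iter k T x) (iter k.+1 T x).
  have a1 : forall k, 1 <= a k.
    by move=> k; apply: d1 => /esym; apply: Hk.
  pose E := range a.
  have En : nonempty E by exists (a 0%N), 0%N.
  have Elb : has_lbound E by exists 1 => _ [k _ <-]; apply: a1.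
  have L1 : 1 <= inf E by apply: lb_le_inf => // _ [k _ <-]; apply: a1.
  have [de de0 H] := C (inf E) (lt_le_trans ltr01 L1).
  have [_ [k _ <-] ak] := inf_adherent de0 (conj En Elb).
  have ge := ge_inf Elb (ex_intro2 _ _ k I erefl).
  have := H _ _ (Xit x k Xx) (Xit x k.+1 Xx) ge ak.
  have ge' := ge_inf Elb (ex_intro2 _ _ k.+1 I erefl).
  rewrite /a /= in ge' *.
  by move=> lt; move: (le_lt_trans ge' lt); rewrite ltxx.
have [k0 Hk0] := ex x0 Xx0.
exists (iter k0 T x0); split => //.
- exact: Xit.
- by move=> w Xw Tw; apply: uniq => //; apply: Xit.
- move=> x Xx eps eps0.
  have [k Hk] := ex x Xx.
  exists k => m km.
  rewrite -(subnK km) iterD.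
  have -> : iter k T x = iter k0 T x0 by apply: uniq => //; apply: Xit.
  by rewrite iter_fix // d0.
Qed.

Theorem theorem8p9 (R : realType) (n : nat) (X : set (zpoint n))
    (kappa : zpoint n -> zpoint n -> Prop) (p : \bar R)
    (T : zpoint n -> zpoint n) :
  (0 < n)%N ->
  (1 <= p)%E ->
  (exists x0, X x0) ->
  dcomplete X (lp_dist p) ->
  (forall x, X x -> X (T x)) ->
  weakly_uniformly_strict_contraction X (lp_dist p) T ->
  exists z, [/\ X z, T z = z,
    (forall w, X w -> T w = w -> w = z) &
    (forall x, X x -> dconverges (lp_dist p) (fun k => iter k T x) z)].
Proof.
move=> _ p1 ex _ XT C.
apply: abstract_fp => //.
- by move=> x; apply: lp_dist0.
- by move=> x y; apply: lp_dist1.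
Qed.
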